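(* Each of the following eight sets of four generalized Bell states in $\mathbb{C}^4\otimes\mathbb{C}^4$ is perfectly distinguishable by one-way LOCC using only projective measurements: $\{\ket{\psi_{00}}\}\cup T$ with $T$ one of $\{\ket{\psi_{01}},\ket{\psi_{02}},\ket{\psi_{11}}\}$, $\{\ket{\psi_{01}},\ket{\psi_{02}},\ket{\psi_{31}}\}$, $\{\ket{\psi_{01}},\ket{\psi_{10}},\ket{\psi_{23}}\}$, $\{\ket{\psi_{01}},\ket{\psi_{11}},\ket{\psi_{22}}\}$, $\{\ket{\psi_{01}},\ket{\psi_{22}},\ket{\psi_{31}}\}$, $\{\ket{\psi_{01}},\ket{\psi_{23}},\ket{\psi_{30}}\}$, $\{\ket{\psi_{02}},\ket{\psi_{11}},\ket{\psi_{21}}\}$, $\{\ket{\psi_{02}},\ket{\psi_{21}},\ket{\psi_{31}}\}$.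
   Context: Generalized Bell states in $\mathbb{C}^4\otimes\mathbb{C}^4$ (Alice holds the first factor, Bob the second): $\ket{\psi_{nm}}=\frac12\sum_{j=0}^{3}e^{2\pi i jn/4}\ket{j}_A\ket{j\oplus_4 m}_B$ for $n,m\in\{0,1,2,3\}$, where $j\oplus_4 m=(j+m)\bmod 4$. Perfect distinguishability by one-way LOCC using only projective measurements means: one party performs a projective measurement on her subsystem, communicates the outcome classically, and the other party then performs a projective measurement (depending on that outcome) whose result identifies with certainty which state of the set was shared. *)

(* Defs.v *)
From mathcomp Require Import all_boot all_order all_algebra algC.
Set Implicit Arguments. Unset Strict Implicit. Unset Printing Implicit Defensive.
Import Order.TTheory GRing.Theory Num.Theory.
Local Open Scope ring_scope.

Definition adjoint (A : 'M[algC]_4) : 'M[algC]_4 := map_mx (fun x => x^*) A^T.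

Definition proj_meas (m : nat) (P : 'I_m -> 'M[algC]_4) : Prop :=
  (forall k, P k *m P k = P k /\ adjoint (P k) = P k) /\
  \sum_(k < m) P k = 1%:M.

(* A vector of C^4 (x) C^4 is represented by its coefficient matrix C:
   psi = sum_{a,b} C a b |a>_A |b>_B.  Action of A (x) B on psi. *)
Definition tens_act (A B C : 'M[algC]_4) : 'M[algC]_4 :=
  \matrix_(a < 4, b < 4) \sum_(a' < 4) \sum_(b' < 4) A a a' * B b b' * C a' b'.

(* Born-rule probability || (A (x) B) psi ||^2 for projectors A, B. *)
Definition outcome_prob (A B C : 'M[algC]_4) : algC :=
  \sum_(a < 4) \sum_(b < 4) `|tens_act A B C a b| ^+ 2.

(* Generalized Bell state psi_{nm} = 1/2 sum_j e^{2 pi i j n/4} |j>|j+m mod 4>;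
   e^{2 pi i/4} = 'i. *)
Definition bell (s : nat * nat) : 'M[algC]_4 :=
  \matrix_(a < 4, b < 4)
    (if ((b : nat) == ((a : nat) + s.2) %% 4)%N then (1 / 2%:R) * 'i ^+ ((a : nat) * s.1)%N else 0).

(* One-way LOCC, Alice measures first (projectively), tells Bob the outcome k,
   Bob measures projectively with Q k; the guess g k l identifies the state
   with certainty: any outcome with nonzero probability for state s yields s. *)
Definition oneway_A_first (S : seq (nat * nat)) : Prop :=
  exists (mA mB : nat) (P : 'I_mA -> 'M[algC]_4) (Q : 'I_mA -> 'I_mB -> 'M[algC]_4)
         (g : 'I_mA -> 'I_mB -> nat * nat),
    proj_meas P /\ (forall k, proj_meas (Q k)) /\
    forall s, s \in S -> forall k l,
      outcome_prob (P k) (Q k l) (bell s) != 0 -> g k l = s.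

Definition oneway_B_first (S : seq (nat * nat)) : Prop :=
  exists (mB mA : nat) (P : 'I_mB -> 'M[algC]_4) (Q : 'I_mB -> 'I_mA -> 'M[algC]_4)
         (g : 'I_mB -> 'I_mA -> nat * nat),
    proj_meas P /\ (forall k, proj_meas (Q k)) /\
    forall s, s \in S -> forall k l,
      outcome_prob (Q k l) (P k) (bell s) != 0 -> g k l = s.

Definition oneway_proj_distinguishable (S : seq (nat * nat)) : Prop :=
  oneway_A_first S \/ oneway_B_first S.

(* Main.v *)
Require Import Defs.
From mathcomp Require Import all_boot all_order all_algebra algC.
From mathcomp Require Import ring lra zify.
Set Implicit Arguments. Unset Strict Implicit. Unset Printing Implicit Defensive.
Import Order.TTheory GRing.Theory Num.Theory.
Local Open Scope ring_scope.

Ltac is_num v := lazymatch v with O => idtac | S ?k => is_num k end.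
Ltac gnat :=
  repeat match goal with
  | |- context [ @eq_op ?T ?x ?y ] =>
      let t := type of x in unify t nat;
      let v := eval vm_compute in (@eq_op T x y) in
      lazymatch v with
      | true => rewrite (_ : @eq_op T x y = true); last by vm_compute
      | false => rewrite (_ : @eq_op T x y = false); last by vm_compute
      end
  | |- context [ (?x %% ?y)%N ] =>
      let v := eval vm_compute in (x %% y)%N in is_num v;
      rewrite (_ : (x %% y)%N = v); last by vm_compute
  | |- context [ (?x %/ ?y)%N ] =>
      let v := eval vm_compute in (x %/ y)%N in is_num v;
      rewrite (_ : (x %/ y)%N = v); last by vm_compute
  | |- context [ (?x + ?y)%N ] =>
      let v := eval vm_compute in (x + y)%N in is_num v;
      rewrite (_ : (x + y)%N = v); last by vm_compute
  | |- context [ (?x * ?y)%N ] =>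
      let v := eval vm_compute in (x * y)%N in is_num v;
      rewrite (_ : (x * y)%N = v); last by vm_compute
  end.

Lemma i4 : 'i ^+ 4 = 1 :> algC.
Proof. by rewrite (exprM 'i 2 2) sqrCi sqrrN expr1n. Qed.
Lemma i3 : 'i ^+ 3 = - 'i :> algC.
Proof. by rewrite exprS sqrCi mulrN1. Qed.
Lemma iE4 k : 'i ^+ k.+4 = 'i ^+ k :> algC.
Proof. by rewrite -addn4 exprD i4 mulr1. Qed.
Lemma ipm a : 'i ^+ a = 'i ^+ (a %% 4) :> algC.
Proof. by rewrite {1}(divn_eq a 4) exprD mulnC exprM i4 expr1n mul1r. Qed.
Lemma conjiX r : ('i ^+ r)^* = 'i ^+ (3 * r) :> algC.
Proof. by rewrite rmorphXn /= conjCi exprM i3. Qed.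

Ltac inorm := rewrite ?conjiX -?exprD; gnat; rewrite ?iE4 ?expr0 ?expr1 ?sqrCi ?i3.

Lemma i_cancel a b : ((a + 2) %% 4 = b %% 4)%N -> 'i ^+ a + 'i ^+ b = 0 :> algC.
Proof.
move=> H; rewrite (ipm a) (ipm b) -H -modnDml.
have : (a %% 4 < 4)%N by rewrite ltn_pmod.
case: (a %% 4)%N => [|[|[|[|//]]]] _; inorm; ring.
Qed.

Definition vecn (c r y : nat) : algC :=
  if y == c then 1 else if y == (c + 2)%N then 'i ^+ r else 0.
Definition prj (c r : nat) : 'M[algC]_4 :=
  \matrix_(x < 4, y < 4) ((2%:R)^-1 * (vecn c r x * (vecn c r y)^*)).
Definition F (l : 'I_4) : 'M[algC]_4 := prj (l %% 2) (1 + 2 * (l %/ 2)).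

Lemma conj_mul r : ('i ^+ r)^* * 'i ^+ r = 1 :> algC.
Proof. by rewrite conjiX -exprD (_ : (3 * r + r = 4 * r)%N) ?exprM ?i4 ?expr1n //; lia. Qed.

Lemma vnorm c r : (c < 2)%N -> \sum_(z < 4) (vecn c r z)^* * vecn c r z = 2%:R.
Proof.
case: c => [|[|//]] _; rewrite !big_ord_recr big_ord0 /= /vecn; gnat;
rewrite ?rmorph0 ?rmorph1 conj_mul; ring.
Qed.

Lemma prj_idem c r : (c < 2)%N -> prj c r *m prj c r = prj c r.
Proof.
move=> Hc; apply/matrixP => x y; rewrite !mxE.
rewrite (eq_bigr (fun z : 'I_4 => (2%:R)^-1 * (2%:R)^-1 * (vecn c r x * (vecn c r y)^*) *
   ((vecn c r z)^* * vecn c r z))); last by move=> z _; rewrite !mxE; ring.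
rewrite -mulr_sumr vnorm //; field; rewrite ?pnatr_eq0 //.
Qed.

Lemma prj_herm c r : adjoint (prj c r) = prj c r.
Proof.
apply/matrixP => x y; rewrite !mxE /= rmorphM /= rmorphM /= conjCK fmorphV /= conjC_nat.
ring.
Qed.

Lemma pmF : proj_meas F.
Proof.
split.
  by move=> k; rewrite /F prj_idem ?prj_herm // ltn_pmod.
apply/matrixP => x y; rewrite summxE !big_ord_recr big_ord0 /= /F; gnat.
rewrite !mxE.
case: x => [[|[|[|[|//]]]] ?]; case: y => [[|[|[|[|//]]]] ?];
 rewrite /vecn /=; gnat; rewrite ?rmorph0 ?rmorph1; inorm; gnat; rewrite ?iE4 ?expr0 ?expr1 ?sqrCi ?i3; field; rewrite ?pnatr_eq0 //.
Qed.

Definition sig (c1 r1 c2 r2 : nat) (C : 'M[algC]_4) : algC :=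
  \sum_(a < 4) \sum_(b < 4) (vecn c1 r1 a)^* * (vecn c2 r2 b)^* * C a b.

Lemma tens_prj c1 r1 c2 r2 C :
  tens_act (prj c1 r1) (prj c2 r2) C =
  \matrix_(a < 4, b < 4) ((2%:R)^-1 * (2%:R)^-1 * vecn c1 r1 a * vecn c2 r2 b * sig c1 r1 c2 r2 C).
Proof.
apply/matrixP => a b; rewrite !mxE /sig mulr_sumr; apply: eq_bigr => a' _.
rewrite mulr_sumr; apply: eq_bigr => b' _; rewrite !mxE; ring.
Qed.

Lemma prob0 c1 r1 c2 r2 C : sig c1 r1 c2 r2 C = 0 ->
  outcome_prob (prj c1 r1) (prj c2 r2) C = 0.
Proof.
move=> H; rewrite /outcome_prob tens_prj big1 // => a _; rewrite big1 // => b _.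
by rewrite mxE H mulr0 normr0 expr0n.
Qed.

Lemma sum_delta (G : nat -> algC) (x : nat) : (x < 4)%N ->
  \sum_(b < 4) (if (b : nat) == x then G b else 0) = G x.
Proof.
move=> Hx; rewrite (bigD1 (Ordinal Hx)) //= eqxx big1 ?addr0 // => b Hb.
case: eqP => // E; case/negP: Hb; apply/eqP; exact: val_inj.
Qed.

Lemma sig_bell c1 r1 c2 r2 n m : (c1 < 2)%N ->
  sig c1 r1 c2 r2 (bell (n, m)) =
  (2%:R)^-1 * ('i ^+ (c1 * n) * vecn c2 (3 * r2) ((c1 + m) %% 4)
     + 'i ^+ (3 * r1) * 'i ^+ ((c1 + 2) * n) * vecn c2 (3 * r2) ((c1 + 2 + m) %% 4)).
Proof.
have cv : forall y, (vecn c2 r2 y)^* = vecn c2 (3 * r2) y.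
  by move=> y; rewrite /vecn; case: eqP; rewrite ?rmorph1 //; case: eqP; rewrite ?rmorph0 ?conjiX.
move=> Hc; rewrite /sig.
rewrite (eq_bigr (fun a : 'I_4 => (vecn c1 r1 a)^* * vecn c2 (3 * r2) ((a + m) %% 4)
     * (1 / 2%:R * 'i ^+ (a * n)))); last first.
  move=> a _.
  rewrite (eq_bigr (fun b : 'I_4 => if (b : nat) == ((a + m) %% 4)%N then
     (vecn c1 r1 a)^* * (vecn c2 r2 b)^* * (1 / 2%:R * 'i ^+ (a * n)) else 0)).
    by rewrite (@sum_delta (fun b => (vecn c1 r1 a)^* * (vecn c2 r2 b)^* * (1 / 2%:R * 'i ^+ (a * n)))) ?ltn_pmod // cv.
  by move=> b _; rewrite mxE /=; case: ifP; rewrite ?mulr0.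
case: c1 Hc => [|[|//]] _; rewrite !big_ord_recr big_ord0 /= /vecn; gnat;
  rewrite ?rmorph0 ?rmorph1 ?conjiX -/(vecn c2 (3 * r2)); ring.
Qed.

Definition zeroC (c1 r1 c2 r2 n m : nat) : bool :=
  let x1 := ((c1 + m) %% 4)%N in
  if x1 == c2 then ((3 * r1 + 2 * n + 3 * r2) %% 4 == 2)%N
  else if x1 == (c2 + 2)%N then ((3 * r1 + 2 * n + r2) %% 4 == 2)%N
  else true.

Lemma key c1 r1 c2 r2 n m : (c1 < 2)%N -> (c2 < 2)%N -> zeroC c1 r1 c2 r2 n m ->
  sig c1 r1 c2 r2 (bell (n, m)) = 0.
Proof.
move=> H1 H2; rewrite sig_bell // /zeroC.
have hx2 : ((c1 + 2 + m) %% 4 = ((c1 + m) %% 4 + 2) %% 4)%N.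
  by rewrite modnDml addnAC.
rewrite hx2.
have : ((c1 + m) %% 4 < 4)%N by rewrite ltn_pmod.
set x1 := ((c1 + m) %% 4)%N; clearbody x1.
case: c2 H2 => [|[|//]] _; case: x1 => [|[|[|[|//]]]] _; rewrite /vecn; gnat;
  rewrite ?mulr0 ?addr0 ?mulr1 ?add0r ?mulr0 //; move/eqP => H;
  rewrite -?exprD i_cancel ?mulr0 //; rewrite mulnDl; lia.
Qed.

Definition pr (k : nat) : nat * nat := ((k %% 2)%N, (1 + 2 * (k %/ 2))%N).

Definition gf (S : seq (nat * nat)) (k l : nat) : nat * nat :=
  head (0, 0)%N [seq s <- S | ~~ zeroC (pr k).1 (pr k).2 (pr l).1 (pr l).2 s.1 s.2].

Definition good (S : seq (nat * nat)) : bool :=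
  all (fun k => all (fun l =>
     all (fun s => (gf S k l == s) || zeroC (pr k).1 (pr k).2 (pr l).1 (pr l).2 s.1 s.2) S)
     (iota 0 4)) (iota 0 4).

Lemma good_ok S : good S -> oneway_A_first S.
Proof.
move=> HS; exists 4%N, 4%N, F, (fun _ => F), (fun k l : 'I_4 => gf S k l).
split; first exact: pmF.
split; first by move=> _; exact: pmF.
move=> [n m] sS k l Hp.
have Hk : (k : nat) \in iota 0 4 by rewrite mem_iota ltn_ord.
have Hl : (l : nat) \in iota 0 4 by rewrite mem_iota ltn_ord.
move/allP: HS => /(_ _ Hk) /allP /(_ _ Hl) /allP /(_ _ sS) /orP [/eqP -> //| Z].
move/negP: Hp; case; apply/eqP; rewrite /F; apply: prob0; apply: key => //; exact: ltn_pmod.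
Qed.

Lemma all_good : all (fun T => good ((0, 0)%N :: T))
  [:: [:: (0,1); (0,2); (1,1)];
              [:: (0,1); (0,2); (3,1)];
              [:: (0,1); (1,0); (2,3)];
              [:: (0,1); (1,1); (2,2)];
              [:: (0,1); (2,2); (3,1)];
              [:: (0,1); (2,3); (3,0)];
              [:: (0,2); (1,1); (2,1)];
              [:: (0,2); (2,1); (3,1)]]%N.
Proof. by vm_compute. Qed.

Theorem theorem4 :
  forall T : seq (nat * nat),
    T \in [:: [:: (0,1); (0,2); (1,1)];
              [:: (0,1); (0,2); (3,1)];
              [:: (0,1); (1,0); (2,3)];
              [:: (0,1); (1,1); (2,2)];
              [:: (0,1); (2,2); (3,1)];
              [:: (0,1); (2,3); (3,0)];
              [:: (0,2); (1,1); (2,1)];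
              [:: (0,2); (2,1); (3,1)]]%N ->
    oneway_proj_distinguishable ((0,0)%N :: T).
Proof.
move=> T HT; left; apply: good_ok; exact: (allP all_good T HT).
Qed.
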